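(* Let $d\ge1$, $\sigma>0$, $\bar\gamma>0$, $\gamma\in(0,\bar\gamma]$, and let $T_\gamma,\tilde T_\gamma:\mathbb{R}^d\to\mathbb{R}^d$ be measurable. Assume there is a non-decreasing $\tau_\gamma:[0,\infty)\to[0,\infty)$ with $\|T_\gamma(x)-T_\gamma(\tilde x)\|\le\tau_\gamma(\|x-\tilde x\|)$ for all $x,\tilde x\in\mathbb{R}^d$, and that there is $c_\infty>0$ with $\sup_x\|T_\gamma(x)-\tilde T_\gamma(x)\|\le\gamma c_\infty$. Let $(Z_k)_{k\ge1}$ be i.i.d. standard Gaussian on $\mathbb{R}^d$, $(U_k)_{k\ge1}$ i.i.d. uniform on $[0,1]$, independent of each other and of an initial pair $(X_0,\tilde X_0)$, and define for $k\in\mathbb{N}$ $$X_{k+1}=T_\gamma(X_k)+(\sigma^2\gamma)^{1/2}Z_{k+1},\qquad \tilde X_{k+1}=B_{k+1}X_{k+1}+(1-B_{k+1})F_\gamma(X_k,\tilde X_k,Z_{k+1}),$$ where $B_{k+1}=\mathbb{1}_{[0,\infty)}(p_\gamma(X_k,\tilde X_k,Z_{k+1})-U_{k+1})$, and, with $E(x,\tilde x)=\tilde T_\gamma(\tilde x)-T_\gamma(x)$, $e(x,\tilde x)=E(x,\tilde x)/\|E(x,\tilde x)\|$ if $E(x,\tilde x)\neq0$ and $e(x,\tilde x)=e_0$ (a fixed unit vector) otherwise, $$F_\gamma(x,\tilde x,z)=\tilde T_\gamma(\tilde x)+(\sigma^2\gamma)^{1/2}\{\mathrm{Id}-2e(x,\tilde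 x)e(x,\tilde x)^\top\}z,\quad p_\gamma(x,\tilde x,z)=1\wedge\frac{\varphi_{\sigma^2\gamma}\{\|E(x,\tilde x)\|-(\sigma^2\gamma)^{1/2}\langle e(x,\tilde x),z\rangle\}}{\varphi_{\sigma^2\gamma}\{(\sigma^2\gamma)^{1/2}\langle e(x,\tilde x),z\rangle\}}.$$ Let $G_k=\langle e(X_{k-1},\tilde X_{k-1}),Z_k\rangle$, and for $a\ge0$, $g\in\mathbb{R}$, $u\in[0,1]$ set $\bar p_{\sigma^2\gamma}(a,g)=1\wedge\frac{\varphi_{\sigma^2\gamma}(a-(\sigma^2\gamma)^{1/2}g)}{\varphi_{\sigma^2\gamma}((\sigma^2\gamma)^{1/2}g)}$, $\mathcal H_\gamma(a,g,u)=\mathbb{1}_{[0,\infty)}(u-\bar p_{\sigma^2\gamma}(a,g))(a-2(\sigma^2\gamma)^{1/2}g)$ and $\mathcal G_\gamma(w,g,u)=\mathcal H_\gamma(\tau_\gamma(w)+\gamma c_\infty,g,u)$ for $w\ge0$. Then for every $k\in\mathbb{N}$, almost surely, $$\|X_{k+1}-\tilde X_{k+1}\|\le\mathcal G_\gamma(\|X_k-\tilde X_k\|,G_{k+1},U_{k+1}).$$ Moreover, for any $g\in\mathbb{R}$ and $u\in[0,1]$, $w\mapsto\mathcal G_\gamma(w,g,u)$ is non-decreasing on $[0,\infty)$.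
   Context: $\varphi_{s}(t)=(2\pi s)^{-1/2}e^{-t^2/(2s)}$ denotes the centered one-dimensional Gaussian density with variance $s>0$. *)

(* Defs.v *)
From HB Require Import structures.
From mathcomp Require Import all_boot all_order all_algebra.
From mathcomp Require Import all_classical all_reals all_analysis.
Set Implicit Arguments. Unset Strict Implicit. Unset Printing Implicit Defensive.
Import Order.TTheory GRing.Theory Num.Theory.
Local Open Scope classical_set_scope.
Local Open Scope ring_scope.

(* R^d is represented by d.-tuple R, which carries the product (= Borel)
   sigma-algebra from MathComp-Analysis (measure_tuple_display). *)
Section vectors.
Context {R : realType} {d : nat}.
Definition vadd (x y : d.-tuple R) : d.-tuple R := [tuple tnth x i + tnth y i | i < d].
Definition vsub (x y : d.-tuple R) : d.-tuple R := [tuple tnth x i - tnth y i | i < d].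
Definition vscale (a : R) (x : d.-tuple R) : d.-tuple R := [tuple a * tnth x i | i < d].
Definition vdot (x y : d.-tuple R) : R := \sum_(i < d) tnth x i * tnth y i.
Definition vnorm (x : d.-tuple R) : R := Num.sqrt (vdot x x).
End vectors.

Definition phi {R : realType} (s t : R) : R :=
  (Num.sqrt (2 * pi * s))^-1 * expR (- t ^+ 2 / (2 * s)).

Definition ind0 {R : realType} (t : R) : R := if 0 <= t then 1 else 0.

Section coupling.
Context {R : realType} {d : nat}.
Variables (T Tt : d.-tuple R -> d.-tuple R) (e0 : d.-tuple R) (sigma gamma : R).
Local Notation s := (Num.sqrt (sigma ^+ 2 * gamma)).

Definition Ediff (x xt : d.-tuple R) : d.-tuple R := vsub (Tt xt) (T x).
Definition edir (x xt : d.-tuple R) : d.-tuple R :=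
  if Ediff x xt != [tuple 0 | _ < d] then vscale (vnorm (Ediff x xt))^-1 (Ediff x xt)
  else e0.
Definition Fgam (x xt z : d.-tuple R) : d.-tuple R :=
  vadd (Tt xt) (vscale s (vsub z (vscale (2 * vdot (edir x xt) z) (edir x xt)))).
Definition pgam (x xt z : d.-tuple R) : R :=
  Num.min 1 (phi (sigma ^+ 2 * gamma) (vnorm (Ediff x xt) - s * vdot (edir x xt) z)
             / phi (sigma ^+ 2 * gamma) (s * vdot (edir x xt) z)).
End coupling.

Section Gfun.
Context {R : realType}.
Variables (sigma gamma : R) (tau : R -> R) (cinf : R).
Local Notation s := (Num.sqrt (sigma ^+ 2 * gamma)).
Definition pbar (a g : R) : R :=
  Num.min 1 (phi (sigma ^+ 2 * gamma) (a - s * g) / phi (sigma ^+ 2 * gamma) (s * g)).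
Definition Hgam (a g u : R) : R := ind0 (u - pbar a g) * (a - 2 * s * g).
Definition Ggam (w g u : R) : R := Hgam (tau w + gamma * cinf) g u.
End Gfun.

Definition sigma_of {d} {Om : Type} {T : measurableType d} (f : Om -> T) : set (set Om) :=
  preimage_set_system setT f measurable.

Definition mutually_independent {dO} {Om : measurableType dO} {R : realType}
  (P : probability Om R) {I : eqType} (F : I -> set (set Om)) : Prop :=
  forall (J : seq I) (A : I -> set Om), uniq J ->
    (forall j, j \in J -> F j (A j)) ->
    P (\bigcap_(j in [set j | j \in J]) A j) = (\prod_(j <- J) P (A j))%E.

Definition has_law {dO} {Om : measurableType dO} {R : realType}
  (P : probability Om R) (f : Om -> R) (mu : set R -> \bar R) : Prop :=
  forall A : set R, measurable A -> P (f @^-1` A) = mu A.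

Definition std_gaussian_vec {dO} {Om : measurableType dO} {R : realType} {d : nat}
  (P : probability Om R) (Z : Om -> d.-tuple R) : Prop :=
  measurable_fun setT Z /\
  mutually_independent P (fun i : 'I_d => sigma_of (fun w => tnth (Z w) i)) /\
  forall i : 'I_d, has_law P (fun w => tnth (Z w) i) (normal_prob 0 1).

Definition uniform01 {dO} {Om : measurableType dO} {R : realType}
  (P : probability Om R) (U : Om -> R) : Prop :=
  measurable_fun setT U /\
  has_law P U (fun A => lebesgue_measure (A `&` `[0, 1]%classic)).

(* Main.v *)
Require Import Defs.
From HB Require Import structures.
From mathcomp Require Import all_boot all_order all_algebra.
From mathcomp Require Import all_classical all_reals all_analysis.
From mathcomp Require Import ring lra.
Import Order.TTheory GRing.Theory Num.Theory.
Local Open Scope classical_set_scope.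
Local Open Scope ring_scope.

Section V.
Context {R : realType} {d : nat}.
Implicit Types x y z : d.-tuple R.

Lemma tnth_vadd x y i : tnth (vadd x y) i = tnth x i + tnth y i.
Proof. by rewrite /vadd tnth_mktuple. Qed.
Lemma tnth_vsub x y i : tnth (vsub x y) i = tnth x i - tnth y i.
Proof. by rewrite /vsub tnth_mktuple. Qed.
Lemma tnth_vscale a x i : tnth (vscale a x) i = a * tnth x i.
Proof. by rewrite /vscale tnth_mktuple. Qed.
Lemma tnth_v0 i : tnth ([tuple 0 | _ < d] : d.-tuple R) i = 0.
Proof. by rewrite tnth_mktuple. Qed.

Lemma vdot_ge0 x : 0 <= vdot x x.
Proof. by apply: sumr_ge0 => i _; rewrite -expr2 sqr_ge0. Qed.
Lemma vnorm_ge0 x : 0 <= vnorm x.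
Proof. exact: sqrtr_ge0. Qed.
Lemma vnorm_sq x : vnorm x ^+ 2 = vdot x x.
Proof. by rewrite /vnorm sqr_sqrtr // vdot_ge0. Qed.
Lemma vdotC x y : vdot x y = vdot y x.
Proof. by apply: eq_bigr => i _; rewrite mulrC. Qed.
Lemma vdotZl a x y : vdot (vscale a x) y = a * vdot x y.
Proof. rewrite /vdot mulr_sumr; apply: eq_bigr => i _; by rewrite tnth_vscale mulrA. Qed.
Lemma vdotZr a x y : vdot x (vscale a y) = a * vdot x y.
Proof. by rewrite vdotC vdotZl vdotC. Qed.
Lemma vdotBl x y z : vdot (vsub x y) z = vdot x z - vdot y z.
Proof. rewrite /vdot -sumrB; apply: eq_bigr => i _; by rewrite tnth_vsub mulrBl. Qed.
Lemma vdotBr x y z : vdot z (vsub x y) = vdot z x - vdot z y.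
Proof. by rewrite vdotC vdotBl vdotC (vdotC y). Qed.
Lemma vdotDl x y z : vdot (vadd x y) z = vdot x z + vdot y z.
Proof. rewrite /vdot -big_split; apply: eq_bigr => i _; by rewrite tnth_vadd mulrDl. Qed.
Lemma vdotDr x y z : vdot z (vadd x y) = vdot z x + vdot z y.
Proof. by rewrite vdotC vdotDl vdotC (vdotC y). Qed.

Lemma vdot0_eq x : vdot x x = 0 -> forall i, tnth x i = 0.
Proof.
move=> h i.
have H : tnth x i * tnth x i = 0.
  apply: (psumr_eq0P _ h) => // j _; by rewrite -expr2 sqr_ge0.
by move/eqP: H; rewrite mulf_eq0 orbb => /eqP.
Qed.

Lemma vnorm_scale a x : vnorm (vscale a x) = `|a| * vnorm x.
Proof.
rewrite /vnorm vdotZl vdotZr mulrA -expr2 sqrtrM ?sqr_ge0 //.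
by rewrite sqrtr_sqr.
Qed.

Lemma vnorm0 x : (forall i, tnth x i = 0) -> vnorm x = 0.
Proof.
move=> h; rewrite /vnorm /vdot big1 ?sqrtr0 // => i _; by rewrite h mul0r.
Qed.

Lemma vnorm_eq0 x : vnorm x = 0 -> forall i, tnth x i = 0.
Proof.
move=> h; apply: vdot0_eq; by rewrite -vnorm_sq h expr0n.
Qed.

Lemma CS x y : vdot x y <= vnorm x * vnorm y.
Proof.
set X := vdot x x; set Y := vdot y y; set D := vdot x y.
have hX : 0 <= X by exact: vdot_ge0.
have hY : 0 <= Y by exact: vdot_ge0.
have key : D ^+ 2 <= X * Y.
  have [Y0|Ypos] := eqVneq Y 0.
    have hy := vdot0_eq y Y0.
    have -> : D = 0 by rewrite /D /vdot big1 // => i _; rewrite hy mulr0.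
    by rewrite expr0n /= mulr_ge0.
  have Yp : 0 < Y by rewrite lt0r Ypos.
  have h := vdot_ge0 (vsub (vscale Y x) (vscale D y)).
  rewrite !vdotBl !vdotBr !vdotZl !vdotZr -/X -/Y -/D (vdotC y x) -/D in h.
  have h2 : 0 <= Y * (X * Y - D ^+ 2) by move: h; congr (_ <= _); ring.
  rewrite -subr_ge0; by rewrite (pmulr_rge0 _ Yp) in h2.
have [Dn|Dp] := lerP D 0.
  by apply: le_trans Dn _; rewrite mulr_ge0 // vnorm_ge0.
rewrite /vnorm -sqrtrM // -(ger0_norm (ltW Dp)) -sqrtr_sqr ler_sqrt //.
exact: mulr_ge0.
Qed.

Lemma vnorm_triangle x y : vnorm (vadd x y) <= vnorm x + vnorm y.
Proof.
have h0 : 0 <= vnorm x + vnorm y by rewrite addr_ge0 // vnorm_ge0.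
rewrite -(ger0_norm h0) -sqrtr_sqr {1}/vnorm ler_sqrt ?sqr_ge0 //.
rewrite !vdotDl !vdotDr (vdotC y x) -!vnorm_sq.
have := CS x y; move=> h; nra.
Qed.

Lemma vsub_tri x y z : vnorm (vsub x z) <= vnorm (vsub x y) + vnorm (vsub y z).
Proof.
have -> : vsub x z = vadd (vsub x y) (vsub y z).
  by apply: eq_from_tnth => i; rewrite tnth_vadd !tnth_vsub; ring.
exact: vnorm_triangle.
Qed.

Lemma vnorm_subC x y : vnorm (vsub x y) = vnorm (vsub y x).
Proof.
have -> : vsub x y = vscale (-1) (vsub y x).
  by apply: eq_from_tnth => i; rewrite tnth_vscale !tnth_vsub; ring.
by rewrite vnorm_scale normrN normr1 mul1r.
Qed.
End V.

Section V2.
Context {R : realType} {d : nat}.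
Implicit Types x y z : d.-tuple R.
Lemma B1_eq x y : vnorm (vsub x (vadd (vscale 1 x) (vscale (1 - 1) y))) = 0.
Proof. by apply: vnorm0 => i; rewrite tnth_vsub tnth_vadd !tnth_vscale; ring. Qed.
Lemma B0_eq x y : vsub x (vadd (vscale 0 x) (vscale (1 - 0) y)) = vsub x y.
Proof. by apply: eq_from_tnth => i; rewrite !tnth_vsub tnth_vadd !tnth_vscale; ring. Qed.
End V2.

Section P.
Context {R : realType}.
Variables (sigma gamma : R).
Hypothesis (hS : 0 < sigma ^+ 2 * gamma).
Local Notation S := (sigma ^+ 2 * gamma).
Local Notation s := (Num.sqrt (sigma ^+ 2 * gamma)).

Lemma hgam0 : gamma != 0.
Proof. by apply: contraTneq hS => ->; rewrite mulr0 ltxx. Qed.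
Lemma hsig0 : sigma != 0.
Proof. by apply: contraTneq hS => ->; rewrite expr0n /= mul0r ltxx. Qed.

Lemma phi_ratio t1 t2 : phi S t1 / phi S t2 = expR ((t2 ^+ 2 - t1 ^+ 2) / (2 * S)).
Proof.
rewrite /phi.
have hc : 0 < (Num.sqrt (2 * pi * S))^-1.
  have hp := pi_gt0 R; rewrite invr_gt0 sqrtr_gt0; apply: mulr_gt0 => //; exact: mulr_gt0.
have hE : expR (- t2 ^+ 2 / (2 * S)) != 0 by rewrite gt_eqF // expR_gt0.
have -> : (Num.sqrt (2 * pi * S))^-1 * expR (- t1 ^+ 2 / (2 * S)) /
    ((Num.sqrt (2 * pi * S))^-1 * expR (- t2 ^+ 2 / (2 * S))) =
    expR (- t1 ^+ 2 / (2 * S)) / expR (- t2 ^+ 2 / (2 * S)).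
  by field; rewrite hE /= lt0r_neq0 // -invr_gt0.
rewrite -expRB; congr expR; field; by rewrite hgam0 hsig0.
Qed.

Lemma pbarE a g : pbar sigma gamma a g = Num.min 1 (expR (- (a * (a - 2 * s * g)) / (2 * S))).
Proof.
rewrite /pbar phi_ratio; congr (Num.min 1 (expR _)).
field; by rewrite hgam0 hsig0.
Qed.

Lemma pbar1 a g : a * (a - 2 * s * g) <= 0 -> pbar sigma gamma a g = 1.
Proof.
move=> h; rewrite pbarE min_l // leNgt expR_lt1 -leNgt.
by rewrite divr_ge0 ?oppr_ge0 // ltW // mulr_gt0.
Qed.

Lemma pbar_le1 a g : pbar sigma gamma a g <= 1.
Proof. by rewrite /pbar ge_min lexx. Qed.

Lemma pbar_anti a a' g : a * (a - 2 * s * g) <= a' * (a' - 2 * s * g) ->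
  pbar sigma gamma a' g <= pbar sigma gamma a g.
Proof.
move=> h; rewrite !pbarE le_min ge_min lexx /= ge_min ler_expR.
apply/orP; right; rewrite !mulNr lerN2; apply: ler_wpM2r => //.
by rewrite invr_ge0 ltW // mulr_gt0.
Qed.

Lemma ind0_01 (t : R) : 0 <= ind0 t <= 1.
Proof. by rewrite /ind0; case: ifP => _; rewrite ?lexx ?ler01. Qed.

Lemma H_ge0 a g u : 0 <= a -> u < 1 -> 0 <= Hgam sigma gamma a g u.
Proof.
move=> ha hu; rewrite /Hgam.
have [hb|hb] := lerP 0 (a - 2 * s * g).
  by rewrite mulr_ge0 //; case/andP: (ind0_01 (u - pbar sigma gamma a g)).
rewrite pbar1; last by rewrite mulr_ge0_le0 // ltW.
by rewrite /ind0 ifF ?mul0r // subr_ge0 leNgt hu.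
Qed.

Lemma H_mono a1 a2 g u : 0 <= a1 -> a1 <= a2 -> u <= 1 ->
  Hgam sigma gamma a1 g u <= Hgam sigma gamma a2 g u.
Proof.
move=> h1 h12 hu; rewrite /Hgam.
have [hb|hb] := lerP (a1 - 2 * s * g) 0.
  rewrite (pbar1 a1); last by rewrite mulr_ge0_le0.
  have [hu1|hu1] := ltrP u 1.
    rewrite /ind0 ifF ?mul0r; last by rewrite subr_ge0 leNgt hu1.
    apply: H_ge0 => //; exact: le_trans h12.
  have -> : u = 1 by apply/eqP; rewrite eq_le hu hu1.
  rewrite /ind0 subrr lexx mul1r subr_ge0 pbar_le1 mul1r.
  lra.
have hb2 : 0 < a2 - 2 * s * g by lra.
have hq : a1 * (a1 - 2 * s * g) <= a2 * (a2 - 2 * s * g).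
  by apply: ler_pM => //; lra.
have hp : pbar sigma gamma a2 g <= pbar sigma gamma a1 g by apply: pbar_anti.
apply: ler_pM; first by case/andP: (ind0_01 (u - pbar sigma gamma a1 g)).
  exact: ltW.
  rewrite /ind0; case: ifP => hh; last by case: ifP => _; rewrite ?ler01 ?lexx.
  rewrite ifT //; lra.
lra.
Qed.
End P.

Section Pt.
Context {R : realType} {d : nat}.
Variables (T Tt : d.-tuple R -> d.-tuple R) (e0 : d.-tuple R) (sigma gamma : R).
Hypothesis (hS : 0 < sigma ^+ 2 * gamma) (he0 : vnorm e0 = 1).
Local Notation s := (Num.sqrt (sigma ^+ 2 * gamma)).

Lemma edir_prop x xt : vnorm (edir T Tt e0 x xt) = 1 /\
  forall i, tnth (Ediff T Tt x xt) i = vnorm (Ediff T Tt x xt) * tnth (edir T Tt e0 x xt) i.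
Proof.
rewrite /edir; case: ifP => hE.
  have hn : vnorm (Ediff T Tt x xt) != 0.
    apply: contraNneq hE => /vnorm_eq0 h; apply/eqP/eq_from_tnth => i.
    by rewrite h tnth_v0.
  split.
    rewrite vnorm_scale ger0_norm ?invr_ge0 ?vnorm_ge0 // mulVf //.
  by move=> i; rewrite tnth_vscale mulrA mulfV // mul1r.
have /eqP hE0 := negbFE hE.
have n0 : vnorm (Ediff T Tt x xt) = 0 by apply: vnorm0 => i; rewrite hE0 tnth_v0.
by split => // i; rewrite n0 mul0r hE0 tnth_v0.
Qed.

Lemma pointwise tau cinf x xt z u : u < 1 ->
  0 <= tau (vnorm (vsub x xt)) + gamma * cinf ->
  vnorm (Ediff T Tt x xt) <= tau (vnorm (vsub x xt)) + gamma * cinf ->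
  vnorm (vsub (vadd (T x) (vscale s z)) (vadd (vscale (ind0 (pgam T Tt e0 sigma gamma x xt z - u)) (vadd (T x) (vscale s z)))
     (vscale (1 - ind0 (pgam T Tt e0 sigma gamma x xt z - u)) (Fgam T Tt e0 sigma gamma x xt z))))
  <= Ggam sigma gamma tau cinf (vnorm (vsub x xt)) (vdot (edir T Tt e0 x xt) z) u.
Proof.
move=> hu ha hna; set Xn := vadd (T x) (vscale s z).
have [he hEi] := edir_prop x xt.
rewrite /Ggam /Fgam.
move: ha hna; set a := tau _ + _ => ha hna.
set n := vnorm (Ediff T Tt x xt) in hEi hna.
set e := edir T Tt e0 x xt in he hEi *.
set g := vdot e z.
have hn0 : 0 <= n by exact: vnorm_ge0.
have -> : pgam T Tt e0 sigma gamma x xt z = pbar sigma gamma n g by [].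
rewrite /ind0; case: ifP => hB.
  rewrite B1_eq; exact: H_ge0.
rewrite B0_eq.
have -> : vsub Xn (vadd (Tt xt) (vscale s (vsub z (vscale (2 * g) e)))) = vscale (2 * s * g - n) e.
  apply: eq_from_tnth => i; have := hEi i.
  rewrite /Xn /Ediff !tnth_vsub !tnth_vadd !tnth_vscale !tnth_vsub tnth_vscale => hi.
  have -> : tnth (Tt xt) i = n * tnth e i + tnth (T x) i by rewrite -hi; ring.
  ring.
rewrite vnorm_scale he mulr1.
have hlt : pbar sigma gamma n g < u by move: hB; rewrite subr_ge0 => /negbT; rewrite -ltNge.
have hq : 0 < n * (n - 2 * s * g).
  rewrite ltNge; apply/negP => hq.
  by move: hlt; rewrite pbar1 // => h1; move: (lt_trans h1 hu); rewrite ltxx.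
have hb : 0 < n - 2 * s * g.
  rewrite ltNge; apply/negP => hb.
  by move: hq; rewrite ltNge mulr_ge0_le0.
have hqa : n * (n - 2 * s * g) <= a * (a - 2 * s * g).
  by apply: ler_pM => //; [exact: ltW | lra].
have hp : pbar sigma gamma a g <= pbar sigma gamma n g by apply: pbar_anti.
rewrite /Hgam /ind0 ifT; last by rewrite subr_ge0; apply: ltW; exact: le_lt_trans hp hlt.
rewrite mul1r distrC ger0_norm; last exact: ltW.
lra.
Qed.
End Pt.

Theorem proposition6 (R : realType) (d : nat) (hd : (0 < d)%N)
  (sigma gammabar gamma cinf : R) (hsigma : 0 < sigma) (hgb : 0 < gammabar)
  (hg0 : 0 < gamma) (hg1 : gamma <= gammabar)
  (T Tt : d.-tuple R -> d.-tuple R)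
  (mT : measurable_fun setT T) (mTt : measurable_fun setT Tt)
  (tau : R -> R)
  (htau0 : forall w, 0 <= w -> 0 <= tau w)
  (htaumono : forall w1 w2, 0 <= w1 -> w1 <= w2 -> tau w1 <= tau w2)
  (hLip : forall x xt, vnorm (vsub (T x) (T xt)) <= tau (vnorm (vsub x xt)))
  (hcinf : 0 < cinf)
  (hsup : forall x, vnorm (vsub (T x) (Tt x)) <= gamma * cinf)
  (e0 : d.-tuple R) (he0 : vnorm e0 = 1)
  (dO : measure_display) (Om : measurableType dO) (P : probability Om R)
  (Z : nat -> Om -> d.-tuple R) (U : nat -> Om -> R)
  (X Xt : nat -> Om -> d.-tuple R)
  (mX0 : measurable_fun setT (X 0%N)) (mXt0 : measurable_fun setT (Xt 0%N))
  (hZ : forall k, (0 < k)%N -> std_gaussian_vec P (Z k))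
  (hU : forall k, (0 < k)%N -> uniform01 P (U k))
  (hindep : mutually_independent P (fun i : option (nat + nat) =>
     match i with
     | None => sigma_of (fun w => (X 0%N w, Xt 0%N w))
     | Some (inl k) => sigma_of (Z k.+1)
     | Some (inr k) => sigma_of (U k.+1)
     end))
  (hX : forall k w, X k.+1 w =
     vadd (T (X k w)) (vscale (Num.sqrt (sigma ^+ 2 * gamma)) (Z k.+1 w)))
  (hXt : forall k w, Xt k.+1 w =
     let B := ind0 (pgam T Tt e0 sigma gamma (X k w) (Xt k w) (Z k.+1 w) - U k.+1 w) in
     vadd (vscale B (X k.+1 w))
          (vscale (1 - B) (Fgam T Tt e0 sigma gamma (X k w) (Xt k w) (Z k.+1 w)))) :
  (forall k : nat, {ae P, forall w,
     vnorm (vsub (X k.+1 w) (Xt k.+1 w)) <=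
     Ggam sigma gamma tau cinf (vnorm (vsub (X k w) (Xt k w)))
       (vdot (edir T Tt e0 (X k w) (Xt k w)) (Z k.+1 w)) (U k.+1 w)}) /\
  (forall g u, 0 <= u <= 1 -> forall w1 w2, 0 <= w1 -> w1 <= w2 ->
     Ggam sigma gamma tau cinf w1 g u <= Ggam sigma gamma tau cinf w2 g u).
Proof.
have hS : 0 < sigma ^+ 2 * gamma by rewrite mulr_gt0 // exprn_gt0.
have hc : 0 <= gamma * cinf by rewrite ltW // mulr_gt0.
split.
- move=> k.
  have [mU hlaw] := hU k.+1 isT.
  exists (U k.+1 @^-1` `[1, +oo[%classic); split.
  + have := mU measurableT _ (measurable_itv `[1, +oo[%R).
    by rewrite setTI.
  + rewrite hlaw; last exact: measurable_itv.
    have -> : `[1, +oo[%classic `&` `[0, 1]%classic = [set (1 : R)].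
      apply/seteqP; split => x /=.
        by rewrite !in_itv /= andbT => -[h1 /andP[_ h2]]; apply/eqP; rewrite eq_le h1 h2.
      by move=> ->; rewrite !in_itv /= lexx ler01.
    exact: lebesgue_measure_set1.
  + move=> w /= hw; rewrite in_itv /= andbT leNgt; apply/negP => hu; apply: hw.
    have := hXt k w; cbv zeta => ->; rewrite hX.
    apply: pointwise => //.
      by rewrite addr_ge0 // htau0 // vnorm_ge0.
    rewrite /Ediff [X in _ <= X]addrC.
    apply: le_trans (vsub_tri _ (T (Xt k w)) _) _.
    apply: lerD; first by rewrite vnorm_subC hsup.
    by rewrite vnorm_subC hLip.
- move=> g u /andP[hu0 hu1] w1 w2 h1 h12; rewrite /Ggam.
  apply: H_mono => //.
    by rewrite addr_ge0 // htau0.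
  by rewrite lerD2r htaumono.
Qed.
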